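(* With the setting in the context, for all $s\in\mathrm{hom}(C,G)_{-1}$ and $v\in\mathrm{hom}(C,G)^1$, $$\mathcal A_s=\prod_n\prod_{x\in K_n}A_x^{s_n(x)},\qquad \mathcal B_v=\prod_n\prod_{x\in K_n}B_x^{v_n(x)},$$ where $s_n(x)\in\widehat G_{n+1}$ is defined by $s_n(x)(g)=s(gx^* )$ for $g\in G_{n+1}$, and $v_n(x)\in G_{n-1}$ is the value of the $n$-th component of $v$ at $x$.
   Context: $(C_\bullet,\partial^C_\bullet)$ is a chain complex with each $C_n$ free abelian on a finite set $K_n$, $K_n\ne\emptyset$ for finitely many $n$; $(G_\bullet,\partial^G_\bullet)$ is a chain complex of finite abelian groups, $\widehat{G}_k=\mathrm{Hom}(G_k,U(1))$. $\mathrm{hom}(C,G)^p=\prod_n\mathrm{Hom}(C_n,G_{n-p})$ with $(\delta^pf)_n=f_{n-1}\partial^C_n-(-1)^p\partial^G_{n-p}f_n$. $\mathrm{hom}(C,G)_p=\mathrm{Hom}(\mathrm{hom}(C,G)^p,U(1))$ (written additively), $\chi_m(f)=m(f)$, $\delta_1m=m\circ\delta^0$. $\mathcal H=\bigotimes_n\bigotimes_{x\in K_n}\mathbb C[G_n]$ with orthonormal basis $|f\rangle$, $f\in\mathrm{hom}(C,G)^0$; $P_t|f\rangle=|f+t\rangle$, $Q_m|f\rangle=\chi_m(f)|f\rangle$; $A_t=P_{\delta^{-1}t}$, $B_m=Q_{\delta_1m}$. $\mathcal A_s=\frac1{|\mathrm{hom}(C,G)^{-1}|}\sum_{t\in\mathrm{hom}(C,G)^{-1}}\chi_s(t)A_t$,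 $\mathcal B_v=\frac1{|\mathrm{hom}(C,G)_1|}\sum_{m\in\mathrm{hom}(C,G)_1}\chi_m(v)B_m$. For $x\in K_n$, $g\in G_{n-p}$, $gx^*\in\mathrm{hom}(C,G)^p$ has $n$-th component sending $x\mapsto g$ and other elements of $K_n$ to $0$, other components $0$; for $r\in\widehat G_{n-p}$, $rx_*(f)=r(f_n(x))$. For $x\in K_n$: $A_x^r=\frac1{|G_{n+1}|}\sum_{h\in G_{n+1}}r(h)A_{hx^*}$ ($r\in\widehat G_{n+1}$), $B_x^g=\frac1{|G_{n-1}|}\sum_{r\in\widehat G_{n-1}}r(g)B_{rx_*}$ ($g\in G_{n-1}$). *)

(* Defs.v *)
From HB Require Import structures.
From mathcomp Require Import all_boot all_order all_algebra all_field.
From Stdlib Require Import ClassicalEpsilon.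
Set Implicit Arguments. Unset Strict Implicit. Unset Printing Implicit Defensive.
Import Order.TTheory GRing.Theory Num.Theory.
Local Open Scope ring_scope.

(* U(1)-valued characters of a finite abelian group (T, add), as finite functions into
   the complex numbers (algC: all character values are roots of unity, hence algebraic). *)
Definition is_char (T : finType) (add : T -> T -> T) (m : {ffun T -> algC}) : Prop :=
  (forall a b, m (add a b) = m a * m b) /\ (forall a, `|m a| = 1).

Definition chars_spec (T : finType) (add : T -> T -> T) (s : seq {ffun T -> algC}) : Prop :=
  uniq s /\ (forall m, m \in s <-> is_char add m).

Definition chars (T : finType) (add : T -> T -> T) : seq {ffun T -> algC} :=
  epsilon (inhabits [::]) (chars_spec add).

Section Setting.
(* The cells: K = disjoint union of the K_n, with deg x = n for x in K_n. *)
Variable cell : finType.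
Variable deg : cell -> int.
(* boundary of C: d^C x = sum_y dC x y * y *)
Variable dC : cell -> cell -> int.
Variable G : int -> finZmodType.
Variable dG : forall n : int, {additive G n -> G (n - 1)}.

(* transport along an equality of degrees (zero if the degrees differ) *)
Definition castz (m n : int) (g : G m) : G n :=
  match @eqP _ m n with
  | ReflectT e => eq_rect m (fun k => G k) g n e
  | ReflectF _ => 0
  end.
Arguments castz : clear implicits.

(* hom(C,G)^p = prod_n Hom(C_n, G_{n-p}) = functions x in K_n |-> G_{n-p} *)
Definition cochain (p : int) := {dffun forall x : cell, G (deg x - p)}.

Definition cadd (p : int) (f t : cochain p) : cochain p := [ffun x => f x + t x].

(* delta^p : hom^p -> hom^q (used with q = p + 1):
   (delta f)_n = f_{n-1} d^C_n - (-1)^p d^G_{n-p} f_n *)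
Definition delta (p q : int) (f : cochain p) : cochain q :=
  [ffun x => \sum_(y : cell) (castz (deg y - p) (deg x - q) (f y)) *~ dC x y
      + castz (deg x - p - 1) (deg x - q)
          (if odd `|p|%N then dG (deg x - p) (f x) else - dG (deg x - p) (f x))].

Arguments delta : clear implicits.

Definition pt (p : int) (x : cell) (g : G (deg x - p)) : cochain p :=
  [ffun y => if y == x then castz (deg x - p) (deg y - p) g else 0].
Arguments pt : clear implicits.

Definition N0 := #|{: cochain 0}|.
Definition op := 'M[algC]_N0.
Definition bas (i : 'I_N0) : cochain 0 := enum_val i.

(* P_t |f> = |f + t>,  Q_m |f> = chi_m(f) |f>  (matrix entry (i,j) = <i|O|j>) *)
Definition Pop (t : cochain 0) : op :=
  \matrix_(i, j) ((bas i == cadd (bas j) t)%:R).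
Definition Qop (m : cochain 0 -> algC) : op :=
  \matrix_(i, j) ((i == j)%:R * m (bas j)).

Definition Aop (t : cochain (-1)) : op := Pop (delta (-1) 0 t).
Definition Bop (m : cochain 1 -> algC) : op := Qop (fun f => m (delta 0 1 f)).

Definition calA (s : {ffun cochain (-1) -> algC}) : op :=
  (#|{: cochain (-1)}|%:R)^-1 *: \sum_(t : cochain (-1)) s t *: Aop t.
Definition calB (v : cochain 1) : op :=
  ((size (chars (@cadd 1)))%:R)^-1 *:
    \sum_(m <- chars (@cadd 1)) m v *: Bop (fun f => m f).

Definition Axr (x : cell) (r : {ffun G (deg x + 1) -> algC}) : op :=
  (#|{: G (deg x + 1)}|%:R)^-1 *:
    \sum_(h : G (deg x + 1)) r h *: Aop (pt (-1) x (castz (deg x + 1) (deg x - -1) h)).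
Definition Bxg (x : cell) (g : G (deg x - 1)) : op :=
  (#|{: G (deg x - 1)}|%:R)^-1 *:
    \sum_(r <- chars (@GRing.add (G (deg x - 1))))
      r g *: Bop (fun f : cochain 1 => r (f x)).

Definition sn (s : {ffun cochain (-1) -> algC}) (x : cell) : {ffun G (deg x + 1) -> algC} :=
  [ffun g => s (pt (-1) x (castz (deg x + 1) (deg x - -1) g))].

Definition degs : seq int := undup [seq deg x | x <- enum cell].

End Setting.

(* Main.v *)
Require Import Defs.
From HB Require Import structures.
From mathcomp Require Import all_boot all_order all_algebra all_field all_fingroup all_character.
From Stdlib Require Import ClassicalEpsilon.
Import Order.TTheory GRing.Theory Num.Theory.
Local Open Scope ring_scope.
Set Implicit Arguments. Unset Strict Implicit.

Section CharCount.
Local Open Scope group_scope.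
Local Open Scope ring_scope.
Variable V : finZmodType.
Let GG := [set: V]%G.
Definition chiF (i : Iirr GG) : {ffun V -> algC} := [ffun a => 'chi[GG]_i a].

Lemma abGG : abelian GG. Proof. exact: FinRing.zmod_abelian. Qed.

Lemma lin_i (i : Iirr GG) : 'chi[GG]_i \is a linear_char.
Proof. exact/char_abelianP/abGG. Qed.

Lemma chiF_char i : is_char (@GRing.add V) (chiF i).
Proof.
split=> [a b|a]; rewrite !ffunE.
  by rewrite -FinRing.zmodMgE lin_charM ?inE // lin_i.
by rewrite normC_lin_char ?inE // lin_i.
Qed.

Lemma chiF_inj : injective chiF.
Proof.
move=> i j e; apply: irr_inj; apply/cfunP => a.
by have := congr1 (fun f : {ffun V -> algC} => f a) e; rewrite /= !ffunE.
Qed.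

Lemma sum_chi (a : V) : \sum_i 'chi[GG]_i a = #|V|%:R * (a == 0)%:R.
Proof.
have := @second_orthogonality_relation _ GG a 1%g (group1 _).
rewrite class1G inE.
under eq_bigr do rewrite lin_char1 ?lin_i // conjC1 mulr1.
move=> ->.
rewrite mulr_natr; congr (_ *+ _).
have -> : 'C_GG[a] = GG.
  apply/setP=> b; rewrite in_setI in_setT /=; apply/cent1P; exact: FinRing.zmod_mulgC.
by rewrite cardsT.
Qed.

Lemma char0 (add : V -> V -> V) m : add = (@GRing.add V) -> is_char add m -> m 0 = 1.
Proof.
move=> -> [hM hN]; have := hM 0 0; rewrite addr0 => h.
have nz : m 0 != 0 by rewrite -normr_eq0 hN oner_eq0.
by apply: (mulfI nz); rewrite -h mulr1.
Qed.

Lemma char_is_chi m : is_char (@GRing.add V) m -> exists i, m = chiF i.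
Proof.
move=> hm; have m0 := char0 (erefl _) hm; case: hm => hM hN.
pose S i := \sum_(a : V) m a * ('chi[GG]_i a)^*.
have H : \sum_i S i != 0.
  rewrite /S exchange_big /=.
  under eq_bigr do rewrite -mulr_sumr -rmorph_sum sum_chi rmorphM /= !conjC_nat.
  rewrite (bigD1 0) //= big1 => [|a /negbTE ->]; last by rewrite mulr0 mulr0.
  by rewrite eqxx mulr1 m0 mul1r addr0 pnatr_eq0 -lt0n; apply/card_gt0P; exists 0.
have [i Si] : exists i, S i != 0.
  apply/existsP; move: H; apply: contraNT; rewrite negb_exists => /forallP h.
  by rewrite big1 // => i _; have := h i; rewrite negbK => /eqP.
exists i.
pose psi a := m a * ('chi[GG]_i a)^*.
have chiM a b : 'chi[GG]_i (a + b) = 'chi[GG]_i a * 'chi[GG]_i b.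
  by rewrite -FinRing.zmodMgE lin_charM ?inE // lin_i.
have psiM a b : psi (a + b) = psi a * psi b.
  by rewrite /psi hM chiM rmorphM /= mulrACA.
have psi1 a : psi a = 1.
  apply/eqP; apply: contraNT Si => ha.
  have : S i = psi a * S i.
    rewrite /S mulr_sumr (reindex_inj (addrI a)) /=.
    by apply: eq_bigr => b _; rewrite -psiM.
  move/eqP; rewrite -subr_eq0 -{1}[S i]mul1r -mulrBl mulf_eq0 subr_eq0 eq_sym.
  by rewrite (negbTE ha).
apply/ffunP=> a; rewrite ffunE.
have := psi1 a; rewrite /psi => h.
have n1 : ('chi[GG]_i a)^* * 'chi[GG]_i a = 1.
  by rewrite mulrC -normCK normC_lin_char ?inE ?lin_i // expr1n.
by rewrite -[m a]mulr1 -n1 mulrA h mul1r.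
Qed.

Lemma chars_ok : chars_spec (@GRing.add V) (map chiF (enum (Iirr GG))).
Proof.
split; first by rewrite map_inj_uniq ?enum_uniq //; exact: chiF_inj.
move=> m; split.
  by case/mapP => i _ ->; exact: chiF_char.
by case/char_is_chi => i ->; apply: map_f; rewrite mem_enum.
Qed.

Lemma chars_perm : perm_eq (chars (@GRing.add V)) (map chiF (enum (Iirr GG))).
Proof.
have [h1 h2] : chars_spec (@GRing.add V) (chars (@GRing.add V)).
  by apply: (epsilon_spec (inhabits [::]) (chars_spec (@GRing.add V))); exists (map chiF (enum (Iirr GG))); exact: chars_ok.
have [h3 h4] := chars_ok.
apply: uniq_perm => // m; apply/idP/idP => H.
  by apply/h4; apply/h2.
by apply/h2; apply/h4.
Qed.

Lemma size_chars : size (chars (@GRing.add V)) = #|V|.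
Proof.
rewrite (perm_size chars_perm) size_map -cardE card_Iirr_abelian ?cardsT //.
exact: abGG.
Qed.

Lemma sum_chars a : \sum_(r <- chars (@GRing.add V)) r a = #|V|%:R * (a == 0)%:R.
Proof.
rewrite (perm_big _ chars_perm) big_map big_enum /=.
by under eq_bigr do rewrite ffunE; rewrite sum_chi.
Qed.

Lemma mem_chars m : m \in chars (@GRing.add V) -> is_char (@GRing.add V) m.
Proof. by rewrite (perm_mem chars_perm) => /mapP[i _ ->]; exact: chiF_char. Qed.
End CharCount.


Definition cz (cell : finType) (deg : cell -> int) (G : int -> finZmodType) (p : int) := cochain deg G p.

Section Z.
Variables (cell : finType) (deg : cell -> int) (G : int -> finZmodType) (p : int).
HB.instance Definition _ := Finite.copy (cz deg G p) (cochain deg G p).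
Definition czero : cz deg G p := [ffun x => 0].
Definition copp (f : cz deg G p) : cz deg G p := [ffun x => - f x].
Lemma caddA : associative (@cadd _ deg G p).
Proof. by move=> a b c; apply/ffunP=> x; rewrite !ffunE addrA. Qed.
Lemma caddC : commutative (@cadd _ deg G p).
Proof. by move=> a b; apply/ffunP=> x; rewrite !ffunE; exact: addrC. Qed.
Lemma add0c : left_id czero (@cadd _ deg G p).
Proof. by move=> a; apply/ffunP=> x; rewrite !ffunE add0r. Qed.
Lemma addNc : left_inverse czero copp (@cadd _ deg G p).
Proof. by move=> a; apply/ffunP=> x; rewrite !ffunE addNr. Qed.
HB.instance Definition _ := GRing.isZmodule.Build (cz deg G p) caddA caddC add0c addNc.
End Z.



Lemma swapl (V : zmodType) (a b c : V) : a + (b + c) = a + c + b.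
Proof. by rewrite -addrA (addrC b). Qed.

Lemma eq_addl (V : zmodType) (a b : V) : (a + b == a) = (b == 0).
Proof. by rewrite -{2}[a]addr0 (inj_eq (addrI a)). Qed.

Section Main.
Variables (cell : finType) (deg : cell -> int) (dC : cell -> cell -> int)
  (G : int -> finZmodType) (dG : forall n : int, {additive G n -> G (n - 1)}).

Lemma castzE m (g : G m) : castz m g = g.
Proof.
rewrite /castz; case: (@eqP _ m m) => [e|//].
by rewrite (eq_irrelevance e erefl).
Qed.

Lemma castzD m n (a b : G m) : castz n (a + b) = castz n a + castz n b.
Proof. by rewrite /castz; case: eqP => [e|_]; [case: n / e | rewrite addr0]. Qed.

Lemma castzN m n (a : G m) : castz n (- a) = - castz n a.
Proof. by rewrite /castz; case: eqP => [e|_]; [case: n / e | rewrite oppr0]. Qed.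

Lemma deltaD p q (f t : cochain deg G p) :
  delta dC dG q (cadd f t) = cadd (delta dC dG q f) (delta dC dG q t).
Proof.
apply/ffunP=> x; rewrite !ffunE.
under eq_bigr do rewrite ffunE castzD mulrzDl.
rewrite big_split /= -addrACA; congr (_ + _).
by case: ifP => _; rewrite raddfD ?opprD castzD.
Qed.

Definition rk (c : cochain deg G 0) : 'I_(N0 deg G) := enum_rank c.

Lemma basK c : bas (rk c) = c.
Proof. exact: enum_rankK. Qed.

Lemma bas_eq i c : (bas i == c) = (i == rk c).
Proof.
apply/eqP/eqP => [<-|->]; last exact: basK.
by rewrite /rk /bas enum_valK.
Qed.

Lemma Pop0 : Pop (czero deg G 0) = 1.
Proof.
apply/matrixP=> i j; rewrite !mxE.
have -> : cadd (bas j) (czero deg G 0) = bas j by apply/ffunP=> x; rewrite !ffunE; exact: addr0.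
by rewrite (inj_eq enum_val_inj).
Qed.

Lemma PopD u w : Pop (cadd u w) = Pop u * Pop w :> op deg G.
Proof.
apply/matrixP=> i j; rewrite -mulmxE !mxE.
rewrite (bigD1 (rk (cadd (bas j) w))) //= big1 => [|k hk]; last first.
  by rewrite !mxE (bas_eq k) (negbTE hk) mulr0.
rewrite /Pop !mxE basK eqxx mulr1 addr0; congr (_%:R); congr (_ == _).
apply/ffunP=> x; rewrite !ffunE; first [exact: swapl | exact: (esym (swapl _ _ _))].
Qed.

Lemma castz0 m n : castz n (0 : G m) = 0.
Proof. by rewrite /castz; case: eqP => [e|_] //; case: n / e. Qed.

Lemma delta0 p q : delta dC dG q (czero deg G p) = czero deg G q.
Proof.
apply/ffunP=> x; rewrite !ffunE big1 => [|y _]; last by rewrite /czero ffunE castz0 mul0rz.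
by case: ifP; rewrite raddf0 ?oppr0 castz0 add0r.
Qed.

Lemma ptxx p x (g : G (deg x - p)) : @pt _ deg G p x g x = g.
Proof. by rewrite ffunE eqxx castzE. Qed.

Lemma ptxy p x y (g : G (deg x - p)) : y != x -> @pt _ deg G p x g y = 0.
Proof. by rewrite ffunE => /negbTE ->. Qed.

Definition supp p (L : seq cell) (t : cochain deg G p) :=
  [forall y, (y \notin L) ==> (t y == 0)].

Lemma char1 (T : finType) (add : T -> T -> T) (z : T) m :
  add z z = z -> is_char add m -> m z = 1.
Proof.
move=> hz [hM hN]; have := hM z z; rewrite hz => h.
have nz : m z != 0 by rewrite -normr_eq0 hN oner_eq0.
by apply: (mulfI nz); rewrite -h mulr1.
Qed.


Definition Lc := flatten [seq [seq x <- index_enum cell | deg x == n] | n <- degs deg].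

Lemma memL_gen ns x : (x \in flatten [seq [seq y <- index_enum cell | deg y == n] | n <- ns]) = (deg x \in ns).
Proof.
elim: ns => [//|n ns IH] /=.
by rewrite mem_cat mem_filter mem_index_enum andbT IH inE eq_sym.
Qed.

Lemma uniqL_gen ns : uniq ns -> uniq (flatten [seq [seq y <- index_enum cell | deg y == n] | n <- ns]).
Proof.
elim: ns => [//|n ns IH]; rewrite cons_uniq => /andP[nns uns].
rewrite [flatten _]/=.
rewrite cat_uniq IH // filter_uniq ?index_enum_uniq //= andbT.
apply/hasPn => y; rewrite memL_gen mem_filter => yns; apply/negP => /andP[/eqP e _].
by rewrite -e yns in nns.
Qed.

Lemma permL : perm_eq Lc (index_enum cell).
Proof.
apply: uniq_perm; first exact/uniqL_gen/undup_uniq.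
  exact: index_enum_uniq.
move=> x; rewrite memL_gen mem_index_enum mem_undup.
by apply: map_f; rewrite mem_enum.
Qed.

Lemma uniqL : uniq Lc.
Proof. by rewrite (perm_uniq permL) index_enum_uniq. Qed.

Lemma memL x : x \in Lc.
Proof. by rewrite (perm_mem permL) mem_index_enum. Qed.

Lemma prod_degs (F : cell -> op deg G) :
  \prod_(n <- degs deg) \prod_(x : cell | deg x == n) F x = \prod_(x <- Lc) F x.
Proof.
rewrite /Lc big_flatten big_map; apply: eq_bigr => n _.
by rewrite big_filter.
Qed.

Lemma prod_scale (L : seq cell) (c : cell -> algC) (M : cell -> op deg G) :
  \prod_(x <- L) (c x *: M x) = (\prod_(x <- L) c x) *: \prod_(x <- L) M x.
Proof.
elim: L => [|x L IH]; first by rewrite !big_nil scale1r.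
by rewrite !big_cons IH -!mulmxE -scalemxAl -scalemxAr scalerA.
Qed.

Lemma card_cochain p : #|cochain deg G p| = (\prod_(x : cell) #|G (deg x - p)|)%N.
Proof.
rewrite card_dep_ffun foldrE big_map.
by rewrite /index_enum /= ?enumT.
Qed.

Variable s : {ffun cochain deg G (-1) -> algC}.
Hypothesis hs : is_char (@cadd _ deg G (-1)) s.

Definition W (t : cochain deg G (-1)) : op deg G := s t *: Aop dC dG t.

Lemma WD a b : W (cadd a b) = W a * W b.
Proof.
rewrite /W /Aop deltaD PopD hs.1 -mulmxE -scalemxAl -scalemxAr scalerA.
by [].
Qed.

Lemma W0 : W (czero deg G (-1)) = 1.
Proof.
rewrite /W /Aop delta0 Pop0 (char1 _ hs) ?scale1r //.
by apply/ffunP=> x; rewrite !ffunE addr0.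
Qed.

Lemma supp_cons x L (h : G (deg x - -1)) (t : cochain deg G (-1)) : x \notin L ->
  supp (x :: L) (cadd (@pt _ deg G (-1) x h) t) && (cadd (@pt _ deg G (-1) x h) t x == h)
  = supp L t.
Proof.
move=> xL; rewrite ffunE ptxx eq_addl.
apply/andP/forallP => [[/forallP H /eqP tx0] y|H].
  apply/implyP => yL; case: (eqVneq y x) => [->|ne]; first by rewrite tx0.
  have := H y; rewrite inE negb_or ne yL /= ffunE ptxy // add0r; exact.
split; last by have := H x; rewrite xL.
apply/forallP=> y; apply/implyP; rewrite inE negb_or => /andP[ne yL].
by rewrite ffunE ptxy // add0r; have := H y; rewrite yL.
Qed.

Lemma prodW (L : seq cell) : uniq L ->
  \sum_(t : cochain deg G (-1) | supp L t) W t =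
  \prod_(x <- L) \sum_(h : G (deg x - -1)) W (@pt _ deg G (-1) x h).
Proof.
elim: L => [_|x L IH /= /andP[xL uL]].
  rewrite big_nil (big_pred1 (czero deg G (-1))) ?W0 // => t /=.
  apply/forallP/eqP => [H|-> y]; last by rewrite /czero ffunE eqxx implybT.
  by apply/ffunP=> y; rewrite /czero ffunE; apply/eqP; exact: (implyP (H y)).
rewrite big_cons -(IH uL) mulr_suml.
rewrite (partition_big (fun t : cochain deg G (-1) => t x) predT) //=.
apply: eq_bigr => h _.
rewrite (reindex_inj (@addrI (cz deg G (-1)) (@pt _ deg G (-1) x h))) /=.
rewrite mulr_sumr; apply: eq_big => [t|t _]; first exact: supp_cons.
exact: WD.
Qed.

Lemma partA : calA dC dG s =
  \prod_(n <- degs deg) \prod_(x : cell | deg x == n) Axr dC dG (sn s x).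
Proof.
rewrite prod_degs.
have AxrE x : Axr dC dG (sn s x) = (#|G (deg x + 1)|%:R)^-1 *:
    \sum_(h : G (deg x - -1)) W (@pt _ deg G (-1) x h).
  by rewrite /Axr; congr (_ *: _); apply: eq_bigr => h _; rewrite ffunE /W castzE.
rewrite (eq_bigr _ (fun x _ => AxrE x)) prod_scale -prodW ?uniqL //.
rewrite /calA; congr (_ *: _).
  by rewrite (perm_big _ permL) /= card_cochain natr_prod prodfV.
apply: eq_bigl => t; apply/esym/forallP => y; by rewrite memL.
Qed.

Lemma Qop_ext (a b : cochain deg G 0 -> algC) : (forall f, a f = b f) -> Qop a = Qop b.
Proof. by move=> h; apply/matrixP=> i j; rewrite !mxE h. Qed.

Lemma QopM (a b : cochain deg G 0 -> algC) : Qop a * Qop b = Qop (fun f => a f * b f).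
Proof.
apply/matrixP=> i j; rewrite -mulmxE !mxE (bigD1 i) //= big1 => [|k ki]; last first.
  by rewrite !mxE eq_sym (negbTE ki) !mul0r.
rewrite !mxE eqxx mul1r addr0.
by case: (eqVneq i j) => [->|_]; rewrite ?mul1r ?mul0r ?mulr0.
Qed.

Lemma Qop1 : Qop (fun _ => 1) = 1 :> op deg G.
Proof. by apply/matrixP=> i j; rewrite !mxE mulr1. Qed.

Lemma prodQ (L : seq cell) (q : cell -> cochain deg G 0 -> algC) :
  \prod_(x <- L) Qop (q x) = Qop (fun f => \prod_(x <- L) q x f).
Proof.
elim: L => [|x L IH]; first by rewrite big_nil -Qop1; apply: Qop_ext => f; rewrite big_nil.
rewrite big_cons IH QopM; apply: Qop_ext => f; by rewrite big_cons.
Qed.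

Lemma BxgE x (g : G (deg x - 1)) :
  Bxg dC dG g = Qop (fun f => ((g + delta dC dG 1 f x) == 0)%:R).
Proof.
apply/matrixP=> i j; rewrite /Bxg /Bop /Qop !mxE summxE.
under eq_bigr do rewrite !mxE mulrCA.
rewrite -mulr_sumr big_seq.
under eq_bigr => r hr do rewrite -(mem_chars hr).1.
rewrite -big_seq sum_chars mulrCA mulKf //.
by rewrite pnatr_eq0 -lt0n; apply/card_gt0P; exists 0.
Qed.

Lemma calBE (v : cochain deg G 1) :
  calB dC dG v = Qop (fun f => ((cadd v (delta dC dG 1 f)) == czero deg G 1)%:R).
Proof.
apply/matrixP=> i j; rewrite /calB /Bop /Qop !mxE summxE.
under eq_bigr do rewrite !mxE mulrCA.
rewrite -mulr_sumr.
change (chars (@cadd _ deg G 1)) with (chars (@GRing.add (cz deg G 1))).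
rewrite big_seq.
under eq_bigr => r hr do rewrite -(@mem_chars (cz deg G 1) r hr).1.
rewrite -big_seq (@sum_chars (cz deg G 1)) (@size_chars (cz deg G 1)) mulrCA mulKf //.
by rewrite pnatr_eq0 -lt0n; apply/card_gt0P; exists (czero deg G 1).
Qed.

Lemma prod_bool (b : cell -> bool) :
  \prod_(x <- index_enum cell) (b x)%:R = [forall x, b x]%:R :> algC.
Proof.
case: (boolP [forall x, b x]) => [/forallP h|/forallPn [x hx]].
  by rewrite big1 // => x _; rewrite h.
by rewrite (bigD1 x) //= (negbTE hx) mul0r.
Qed.

Lemma partB (v : cochain deg G 1) :
  calB dC dG v = \prod_(n <- degs deg) \prod_(x : cell | deg x == n) Bxg dC dG (v x).
Proof.
rewrite prod_degs calBE (eq_bigr _ (fun x _ => BxgE (v x))) prodQ.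
apply: Qop_ext => f; rewrite (perm_big _ permL) /= prod_bool; congr ((nat_of_bool _)%:R).
apply/idP/idP => [/eqP h|/forallP h]; first apply/forallP => x.
  by have := congr1 (fun t : cochain deg G 1 => t x) h; rewrite /= !ffunE => ->.
apply/eqP/ffunP=> x; rewrite [LHS]ffunE [RHS]ffunE; apply/eqP; exact: h.
Qed.
End Main.

Unset Implicit Arguments. Set Strict Implicit.

Theorem proposition13
  (cell : finType) (deg : cell -> int) (dC : cell -> cell -> int)
  (G : int -> finZmodType) (dG : forall n : int, {additive G n -> G (n - 1)})
  (hdC : forall x y : cell, dC x y != 0 -> deg y = deg x - 1)
  (hCC : forall x z : cell, \sum_(y : cell) dC x y * dC y z = 0)
  (hGG : forall (n : int) (g : G n), dG (n - 1) (dG n g) = 0)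
  (s : {ffun cochain deg G (-1) -> algC}) (hs : is_char (@cadd cell deg G (-1)) s)
  (v : cochain deg G 1) :
  calA dC dG s =
    \prod_(n <- degs deg) \prod_(x : cell | deg x == n) Axr dC dG (sn s x)
  /\
  calB dC dG v =
    \prod_(n <- degs deg) \prod_(x : cell | deg x == n) Bxg dC dG (v x).
Proof.
split; [exact: partA | exact: partB].
Qed.
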